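(* Let $F=(f_1,\dots,f_s)\subset\mathbb K[X]$ generate a zero-dimensional ideal $J$ with $d=\dim_{\mathbb K}\mathbb K[X]/J$, let $\mathcal B=\{b_1,\dots,b_d\}$ be any set of monomials whose classes form a basis of $\mathbb K[X]/J$ (not necessarily a standard basis), and let $a\neq1$ be a monomial. Let $T_a\in\mathbb K^{d\times d}$ be the matrix of multiplication by $a$ on $\mathbb K[X]/J$ in the basis $\mathcal B$, i.e. $[a b_i]=\sum_j t_{ij}[b_j]$, and put $V=a\,\mathbf b-T_a\mathbf b$, where $\mathbf b=(b_1,\dots,b_d)^\top$. Suppose $H\in\mathbb K[X]^{d\times s}$ satisfies $V=H\,(f_1,\dots,f_s)^\top$. For $k=1,\dots,s$ let $A_k$ be the set of monomials occurring in at least one entry of the $k$-th column of $H$, and $A=(A_1,\dots,A_s)$. Then the Macaulay matrix $M(A\cdot F)$ is an elimination template for $F$ with respect to $a$ (and $\mathcal B$).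
   Context: $[X]$ denotes the set of monomials in $X=\{x_1,\dots,x_k\}$. For a finite tuple of polynomials $P=(p_1,\dots,p_t)$, $[X]_P$ is the set of all monomials appearing in the $p_i$; if $[X]_P=\{m_1,\dots,m_n\}$, the Macaulay matrix $M(P)\in\mathbb K^{t\times n}$ has $(i,j)$ entry equal to the coefficient of $m_j$ in $p_i$. For $A=(A_1,\dots,A_s)$ with $A_j\subset[X]$ finite, the set of shifts is $A\cdot F=\{m f_j: m\in A_j,\ 1\le j\le s\}$. Given a monomial basis $\mathcal B$ of $\mathbb K[X]/\langle F\rangle$ (a set of monomials whose classes form a basis) and an action monomial $a$, set $\mathcal R=\{ab: b\in\mathcal B\}\setminus\mathcal B$ (reducible monomials), $\overline{\mathcal B}=\mathcal B\cap[X]_{A\cdot F}$ (basic monomials present), and $\mathcal E=[X]_{A\cdot F}\setminus(\mathcal R\cup\mathcal B)$ (excessive monomials). The Macaulay matrix $M(A\cdot F)$ with columns arranged in blocks $[\,M_{\mathcal E}\ M_{\mathcal R}\ M_{\overline{\mathcal B}}\,]$ is called an elimination template for $F$ with respect to $a$ if (1) $\mathcal R\subset[X]_{A\cdot F}$, and (2) its reduced row echelon form is $$\begin{bmatrix} * & 0 & * \\ 0 & I & \widetilde M_{\overline{\mathcal B}} \\ 0 & 0 & 0\end{bmatrix},$$ where $*$ denotes arbitrary submatrices, $0$ zero matrices of suitable sizes, $I$ the identity matrix of order $\#\mathcal R$, and $\widetilde M_{\overline{\mathcal B}}$ is a $\#\mathcal R\times\#\overline{\mathcal B}$ matrix (column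 blocks correspond to $\mathcal E$, $\mathcal R$, $\overline{\mathcal B}$). *)

(* Defs.v *)
From HB Require Import structures.
From mathcomp Require Import all_boot all_order all_algebra.
From mathcomp Require Import mpoly.
Set Implicit Arguments. Unset Strict Implicit. Unset Printing Implicit Defensive.
Import Order.TTheory GRing.Theory.
Local Open Scope ring_scope.

Section Defs.
Variables (K : fieldType) (n s d : nat).
Notation poly := {mpoly K[n]}.
Notation mon := 'X_{1..n}.

Definition in_ideal (F : 'I_s -> poly) (p : poly) : Prop :=
  exists h : 'I_s -> poly, p = \sum_(k < s) h k * F k.

Definition quotient_basis (F : 'I_s -> poly) (B : 'I_d -> mon) : Prop :=
  (forall p : poly, exists c : 'I_d -> K,
      in_ideal F (p - \sum_(i < d) c i *: 'X_[B i])) /\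
  (forall c : 'I_d -> K,
      in_ideal F (\sum_(i < d) c i *: 'X_[B i]) -> forall i, c i = 0).

Definition col_monomials (H : 'I_d -> 'I_s -> poly) (k : 'I_s) : seq mon :=
  undup (flatten [seq msupp (H i k) | i <- enum 'I_d]).

Definition shifts (F : 'I_s -> poly) (A : 'I_s -> seq mon) : seq poly :=
  undup (flatten [seq [seq 'X_[m] * F k | m <- A k] | k <- enum 'I_s]).

Definition monomials_of (P : seq poly) : seq mon :=
  undup (flatten [seq msupp p | p <- P]).

Definition basis_seq (B : 'I_d -> mon) : seq mon := [seq B i | i <- enum 'I_d].

Definition reducible (B : 'I_d -> mon) (a : mon) : seq mon :=
  undup [seq m <- [seq mnm_add a b | b <- basis_seq B] | m \notin basis_seq B].

Definition basic_present (P : seq poly) (B : 'I_d -> mon) : seq mon :=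
  [seq b <- basis_seq B | b \in monomials_of P].

Definition excessive (P : seq poly) (B : 'I_d -> mon) (a : mon) : seq mon :=
  [seq m <- monomials_of P | (m \notin reducible B a) && (m \notin basis_seq B)].

Definition columns (P : seq poly) (B : 'I_d -> mon) (a : mon) : seq mon :=
  excessive P B a ++ [seq m <- reducible B a | m \in monomials_of P]
                  ++ basic_present P B.

Definition macaulay (P : seq poly) (cols : seq mon) : 'M[K]_(size P, size cols) :=
  \matrix_(i < size P, j < size cols) (nth 0 P i)@_(nth 0%MM cols j).

End Defs.

Section RREF.
Variables (K : fieldType) (m p : nat).

Definition is_pivot (R : 'M[K]_(m, p)) (i : 'I_m) (j : 'I_p) : Prop :=
  R i j != 0 /\ (forall j' : 'I_p, (j' < j)%N -> R i j' = 0).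

Definition is_rref (R : 'M[K]_(m, p)) : Prop :=
  (forall i1 i2 : 'I_m, (i1 <= i2)%N -> (forall j, R i1 j = 0) -> forall j, R i2 j = 0) /\
  (forall i j, is_pivot R i j -> R i j = 1 /\ forall i', i' != i -> R i' j = 0) /\
  (forall (i1 i2 : 'I_m) (j1 j2 : 'I_p), (i1 < i2)%N -> is_pivot R i1 j1 -> is_pivot R i2 j2 -> (j1 < j2)%N).

Definition rref_of (R M : 'M[K]_(m, p)) : Prop :=
  is_rref R /\ exists P : 'M[K]_m, P \in unitmx /\ R = P *m M.

(* block shape [[*, 0, *], [0, I, *], [0, 0, 0]] with column blocks of widths
   e, r, p - e - r, and the identity block of order r *)
Definition template_shape (e r : nat) (R : 'M[K]_(m, p)) : Prop :=
  exists p1 : nat, (p1 + r <= m)%N /\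
  forall (i : 'I_m) (j : 'I_p),
    ((i < p1)%N -> (e <= j < e + r)%N -> R i j = 0) /\
    ((p1 <= i < p1 + r)%N -> (j < e + r)%N ->
        R i j = ((e <= j)%N && (j - e == i - p1)%N)%:R) /\
    ((p1 + r <= i)%N -> R i j = 0).

End RREF.

Definition elimination_template (K : fieldType) (n s d : nat)
    (F : 'I_s -> {mpoly K[n]}) (A : 'I_s -> seq 'X_{1..n})
    (B : 'I_d -> 'X_{1..n}) (a : 'X_{1..n}) : Prop :=
  let P := shifts F A in
  let M := macaulay P (columns P B a) in
  {subset reducible B a <= monomials_of P} /\
  exists R, rref_of R M /\
    template_shape (size (excessive P B a)) (size (reducible B a)) R.

(* Main.v *)
Require Import Defs.
From HB Require Import structures.
From mathcomp Require Import all_boot all_order all_algebra.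
From mathcomp Require Import mpoly.
From mathcomp Require Import fingroup perm zify.
Set Implicit Arguments. Unset Strict Implicit. Unset Printing Implicit Defensive.
Import GRing.Theory.
Local Open Scope ring_scope.


Section RrefEx.
Variables (K : fieldType) (m p : nat).

Definition rinv (R : 'M[K]_(m, p)) (c k : nat) (piv : nat -> nat) : Prop :=
  (k <= m)%N /\
  (forall (i : 'I_m) (j : 'I_p), (k <= i)%N -> (j < c)%N -> R i j = 0) /\
  (forall i, (i < k)%N -> (piv i < c)%N) /\
  (forall (i : 'I_m) (j : 'I_p), (i < k)%N -> (j < piv i)%N -> R i j = 0) /\
  (forall (i : 'I_m) (j : 'I_p), (i < k)%N -> nat_of_ord j = piv i -> R i j = 1) /\
  (forall (i i' : 'I_m) (j : 'I_p), (i < k)%N -> nat_of_ord j = piv i -> i' != i -> R i' j = 0) /\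
  (forall i i', (i < i')%N -> (i' < k)%N -> (piv i < piv i')%N).

Lemma elim_step (R : 'M[K]_(m, p)) (c k : nat) (hk : (k < m)%N) (i0 : 'I_m) (jc : 'I_p) :
  nat_of_ord jc = c -> (k <= i0)%N -> R i0 jc != 0 ->
  (forall (i : 'I_m) (j : 'I_p), (k <= i)%N -> (j < c)%N -> R i j = 0) ->
  exists2 Q : 'M[K]_m, Q \in unitmx &
    (forall (i : 'I_m) (j : 'I_p), (j < c)%N -> (Q *m R) i j = R i j) /\
    (forall i : 'I_m, (Q *m R) i jc = (nat_of_ord i == k)%:R) /\
    (forall (j : 'I_p), (j < c)%N -> (Q *m R) (Ordinal hk) j = 0).
Proof.
move=> ejc hi0 nz Z.
set kk := Ordinal hk.
set R1 := tperm_mx i0 kk *m R.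
have R1E i j : R1 i j = R (tperm i0 kk i) j by rewrite /R1 -xrowE mxE.
set al := (R1 kk jc)^-1.
have R1kk : R1 kk jc = R i0 jc by rewrite R1E tpermR.
set d := \row_(i < m) (if i == kk then al else 1).
set R2 := diag_mx d *m R1.
have R2E i j : R2 i j = (if i == kk then al else 1) * R1 i j by rewrite /R2 mul_diag_mx !mxE.
set u := \col_(i < m) ((i != kk)%:R * R2 i jc).
set N := u *m (delta_mx 0 kk : 'rV_m).
have NN : N *m N = 0.
  rewrite /N mulmxA -(mulmxA u) -rowE.
  have -> : row kk u = 0 by apply/rowP => z; rewrite !mxE eqxx mul0r.
  by rewrite mulmx0 mul0mx.
set Q3 := 1%:M - N.
have uQ3 : Q3 \in unitmx.
  have [] := @mulmx1_unit _ _ (1%:M + N) Q3 => //.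
  rewrite /Q3 mulmxBr mulmx1 mulmxDl mul1mx NN.
  by rewrite addr0 addrK.
have uQ2 : diag_mx d \in unitmx.
  rewrite unitmxE det_diag unitfE; apply/prodf_neq0 => i _; rewrite mxE.
  case: ifP => _; last exact: oner_neq0.
  by rewrite /al invr_eq0 R1kk.
have uQ1 : (tperm_mx i0 kk : 'M[K]_m) \in unitmx.
  by rewrite unitmxE det_perm unitrX ?unitrN ?unitr1.
have R2kkc : R2 kk jc = 1 by rewrite R2E eqxx /al mulVf // R1kk.
have R3E i j : (Q3 *m R2) i j = R2 i j - (i != kk)%:R * R2 i jc * R2 kk j.
  rewrite /Q3 mulmxBl mul1mx /N -mulmxA -rowE !mxE big_ord1 !mxE.
  done.
have R1low (i : 'I_m) (j : 'I_p) : (j < c)%N -> R1 i j = R i j.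
  move=> jlt; rewrite R1E.
  case: (ltnP i k) => ik.
    rewrite tpermD //.
      by apply/eqP => e; move: ik; rewrite -e ltnNge hi0.
    by apply/eqP => e; move: ik; rewrite -e /= ltnn.
  rewrite (Z i) //; apply: Z => //.
  by case: tpermP.
exists (Q3 *m diag_mx d *m tperm_mx i0 kk).
  by rewrite !unitmx_mul uQ3 uQ2 uQ1.
have EQ : Q3 *m diag_mx d *m tperm_mx i0 kk *m R = Q3 *m R2 by rewrite /R2 /R1 !mulmxA.
rewrite EQ; split; [|split].
- move=> i j jlt; rewrite R3E.
  have R2kkj : R2 kk j = 0 by rewrite R2E R1low // (Z kk) ?mulr0.
  rewrite R2kkj mulr0 subr0 R2E R1low //.
  case: eqP => [->|_]; last by rewrite mul1r.
  by rewrite (Z kk) ?mulr0.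
- move=> i; rewrite R3E R2kkc mulr1.
  case: (eqVneq i kk) => [->|ne]; first by rewrite eqxx /= mul0r subr0 R2kkc.
  rewrite /= mul1r subrr.
  by have -> : (nat_of_ord i == k) = false by apply/negP => /eqP e; case/eqP: ne; apply: val_inj.
- by move=> j jlt; rewrite R3E eqxx /= !mul0r subr0 R2E R1low // (Z kk) ?mulr0.
Qed.

Lemma rref_ind (M : 'M[K]_(m, p)) c : (c <= p)%N ->
  exists R : 'M[K]_(m, p), exists Q : 'M[K]_m, exists k, exists piv,
    [/\ Q \in unitmx, R = Q *m M & rinv R c k piv].
Proof.
elim: c => [_|c IH cp].
  exists M, 1%:M, 0%N, (fun _ => 0%N); split; first exact: unitmx1.
    by rewrite mul1mx.
  by do !split => //.
have [R [Q [k [piv [uQ RE [km [Z [pc [bef [one [cl inc]]]]]]]]]]] := IH (ltnW cp).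
set jc := Ordinal cp.
case: (boolP [exists i : 'I_m, (k <= i)%N && (R i jc != 0)]) => [/existsP [i0 /andP [hi0 nz]]|none].
  have hk : (k < m)%N by apply: leq_trans (ltn_ord i0).
  have [Q' uQ' [F1 [F2 F3]]] := @elim_step R c k hk i0 jc erefl hi0 nz Z.
  exists (Q' *m R), (Q' *m Q), k.+1, (fun i => if i == k then c else piv i).
  split; first by rewrite unitmx_mul uQ' uQ.
    by rewrite RE mulmxA.
  split; first exact: hk.
  split.
    move=> i j ki jc1; rewrite ltnS leq_eqVlt in jc1; case/orP: jc1 => [/eqP ej|jc1].
      have -> : j = jc by apply: val_inj.
      rewrite F2; case: eqP => // e; move: ki; by rewrite e ltnn.
    by rewrite F1 // Z // ltnW.
  split.
    move=> i; rewrite ltnS leq_eqVlt; case/orP => [/eqP ->|ik]; first by rewrite eqxx.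
    rewrite (ltn_eqF ik) ltnS; exact: ltnW (pc _ ik).
  split.
    move=> i j; rewrite ltnS leq_eqVlt; case/orP => [/eqP ei|ik].
      rewrite ei eqxx => jlt.
      have -> : i = Ordinal hk by apply: val_inj.
      by rewrite F3.
    rewrite (ltn_eqF ik) => jlt; rewrite F1; first exact: bef.
    exact: leq_trans jlt (ltnW (pc _ ik)).
  split.
    move=> i j; rewrite ltnS leq_eqVlt; case/orP => [/eqP ei|ik].
      rewrite ei eqxx => ej; have -> : j = jc by apply: val_inj.
      by rewrite F2 ei eqxx.
    rewrite (ltn_eqF ik) => ej; rewrite F1 ?one //.
    by rewrite ej; apply: pc.
  split.
    move=> i i' j; rewrite ltnS leq_eqVlt; case/orP => [/eqP ei|ik].
      rewrite ei eqxx => ej ne; have -> : j = jc by apply: val_inj.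
      rewrite F2; case: eqP => // e; case/eqP: ne; apply: val_inj => /=; by rewrite e ei.
    rewrite (ltn_eqF ik) => ej ne; rewrite F1; first exact: (cl i).
    by rewrite ej; apply: pc.
  move=> i i' ii'; rewrite ltnS leq_eqVlt; case/orP => [/eqP ei|ik].
    rewrite ei eqxx (ltn_eqF (leq_trans ii' _)) ?ei //; apply: pc; by rewrite -ei.
  by rewrite (ltn_eqF ik) (ltn_eqF (ltn_trans ii' ik)) inc.
exists R, Q, k, piv; split => //.
split => //; split.
  move=> i j ki; rewrite ltnS leq_eqVlt; case/orP => [/eqP ej|jc1]; last exact: Z.
  have -> : j = jc by apply: val_inj.
  apply/eqP; apply: contraNT none => nz.
  by apply/existsP; exists i; rewrite ki nz.
split; first by move=> i ik; apply: ltnW; rewrite ltnS pc.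
by do !split.
Qed.

Lemma rinv_pivot (R : 'M[K]_(m, p)) k piv (i : 'I_m) (j : 'I_p) :
  rinv R p k piv -> is_pivot R i j -> (i < k)%N /\ nat_of_ord j = piv i.
Proof.
move=> [km [Z [pc [bef [one [cl inc]]]]]] [nz hb].
have ik : (i < k)%N.
  rewrite ltnNge; apply/negP => ki; by rewrite (Z i j ki (ltn_ord j)) eqxx in nz.
split => //.
case: (ltngtP j (piv i)) => // h.
  by rewrite (bef i j ik h) eqxx in nz.
have := one i (Ordinal (pc i ik)) ik erefl.
by rewrite (hb (Ordinal (pc i ik))) //; move/esym/eqP; rewrite oner_eq0.
Qed.

Lemma rinv_rref (R : 'M[K]_(m, p)) k piv : rinv R p k piv -> is_rref R.
Proof.
move=> H; have H' := H; move: H' => [km [Z [pc [bef [one [cl inc]]]]]].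
split.
  move=> i1 i2 le z j.
  case: (ltnP i1 k) => ik.
    have := one i1 (Ordinal (pc i1 ik)) ik erefl.
    by rewrite z => /esym/eqP; rewrite oner_eq0.
  apply: Z => //; exact: leq_trans le.
split.
  move=> i j pv; have [ik ej] := rinv_pivot H pv.
  split; first exact: one.
  by move=> i' ne; apply: (cl i).
move=> i1 i2 j1 j2 lt p1 p2.
have [ik1 e1] := rinv_pivot H p1; have [ik2 e2] := rinv_pivot H p2.
by rewrite e1 e2; apply: inc.
Qed.

Lemma rref_shape (M : 'M[K]_(m, p)) (e r : nat) :
  (e + r <= p)%N ->
  (forall x : 'rV[K]_m, (forall j : 'I_p, (j < e + r)%N -> (x *m M) 0 j = 0) -> x *m M = 0) ->
  (forall t, (t < r)%N -> exists x : 'rV[K]_m,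
      (forall j : 'I_p, (j < e)%N -> (x *m M) 0 j = 0) /\
      (forall j : 'I_p, (e <= j < e + r)%N -> (x *m M) 0 j = ((j - e)%N == t)%:R)) ->
  exists R, rref_of R M /\ template_shape e r R.
Proof.
move=> erp HA HB.
have [R [Q [k [piv [uQ RE Hinv]]]]] := rref_ind M (leqnn p).
have Hinv' := Hinv; move: Hinv' => [km [Z [pc [bef [one [cl inc]]]]]].
exists R; split.
  split; first exact: rinv_rref Hinv.
  by exists Q.
have mono i i' : (i <= i')%N -> (i' < k)%N -> (piv i <= piv i')%N.
  rewrite leq_eqVlt; case/orP => [/eqP -> //|lt ik]; exact: ltnW (inc _ _ lt ik).
have coefy (y : 'rV[K]_m) (l : 'I_m) (jl : 'I_p) : (l < k)%N -> nat_of_ord jl = piv l ->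
    (y *m R) 0 jl = y 0 l.
  move=> lk ej; rewrite mxE (bigD1 l) //= (one l jl lk ej) mulr1 big1 ?addr0 //.
  by move=> i ne; rewrite (cl l i jl lk ej ne) mulr0.
have toR (x : 'rV[K]_m) : x *m M = (x *m invmx Q) *m R.
  by rewrite RE mulmxA mulmxKV.
have C1 i : (i < k)%N -> (piv i < e + r)%N.
  move=> ik; rewrite ltnNge; apply/negP => le.
  have im : (i < m)%N by apply: leq_trans ik km.
  set io := Ordinal im.
  have := HA ('e_io *m Q).
  have rowR : 'e_io *m Q *m M = row io R by rewrite rowE RE mulmxA.
  rewrite rowR => /(_ _)/rowP h.
  have: row io R 0 (Ordinal (pc i ik)) = 0.
    rewrite h ?mxE //; move=> j jl; rewrite mxE; apply: bef => //.
    exact: leq_trans jl le.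
  by rewrite mxE (one io) // => /eqP; rewrite oner_eq0.
have C2 t : (t < r)%N -> exists i, (i < k)%N /\ piv i = (e + t)%N.
  move=> tr; have [x [x1 x2]] := HB t tr.
  case: (boolP [exists i : 'I_m, (i < k)%N && (piv i == e + t)%N]).
    by case/existsP => i /andP [ik /eqP ei]; exists (nat_of_ord i).
  move=> none; exfalso.
  have j0p : (e + t < p)%N by lia.
  set j0 := Ordinal j0p.
  have := x2 j0; rewrite /= leq_addr /= ltn_add2l tr addKn eqxx => /(_ isT).
  rewrite toR mxE big1 => [/eqP|l _]; first by rewrite eq_sym oner_eq0.
  case: (ltnP l k) => lk; last by rewrite (Z l j0 lk) ?mulr0.
  set jl := Ordinal (pc l lk).
  rewrite -(coefy _ l jl lk erefl) -toR.
  have ne : piv l != (e + t)%N.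
    apply: contraNneq none => h; apply/existsP; exists l; by rewrite lk h eqxx.
  case: (ltnP (piv l) e) => h1; first by rewrite x1 ?mul0r.
  case: (ltnP (piv l) (e + r)) => h2.
    rewrite x2 /=; last by rewrite h1 h2.
    have -> : ((piv l - e)%N == t) = false by apply/negbTE; move: ne; apply: contra => /eqP; lia.
    by rewrite mul0r.
  by rewrite (bef l j0 lk) ?mulr0 //= ; lia.
set p1 := find (fun i => (e <= piv i)%N) (iota 0 k).
have p1k : (p1 <= k)%N by have := find_size (fun i => (e <= piv i)%N) (iota 0 k); rewrite size_iota.
have bp1 i : (i < p1)%N -> (piv i < e)%N.
  move=> ip; have := before_find 0 ip; rewrite nth_iota ?add0n; last exact: leq_trans ip p1k.
  by move/negbT; rewrite -ltnNge.
have ap1 i : (p1 <= i)%N -> (i < k)%N -> (e <= piv i)%N.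
  move=> pi ik.
  have hs : has (fun i => (e <= piv i)%N) (iota 0 k).
    rewrite has_find size_iota; lia.
  have := nth_find 0 hs; rewrite -/p1 nth_iota ?add0n; last by rewrite has_find size_iota in hs.
  move=> h; apply: leq_trans h _; exact: mono.
have MI t : (t < r)%N -> (p1 + t < k)%N /\ piv (p1 + t)%N = (e + t)%N.
  elim/ltn_ind: t => t IH tr.
  have [i [ik ei]] := C2 t tr.
  have pi : (p1 <= i)%N.
    rewrite leqNgt; apply/negP => /bp1; rewrite ei; lia.
  have ti : (p1 + t <= i)%N.
    rewrite leqNgt; apply/negP => lt.
    have tt : (i - p1 < t)%N by lia.
    have [_ h] := IH _ tt (ltn_trans tt tr).
    move: h; rewrite subnKC // ei; lia.
  have ptk : (p1 + t < k)%N by exact: leq_ltn_trans ti ik.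
  split => //.
  apply/eqP; rewrite eqn_leq; apply/andP; split.
    by rewrite -ei; apply: mono.
  case: t IH tr ti ptk ei => [|t] IH tr ti ptk ei.
    rewrite addn0; apply: ap1; lia.
  have [_ h] := IH t (ltnSn t) (ltnW tr).
  have h3 : (p1 + t < p1 + t.+1)%N by lia.
  have := inc _ _ h3 ptk; rewrite h; lia.
have kE : k = (p1 + r)%N.
  apply/eqP; rewrite eqn_leq; apply/andP; split.
    rewrite leqNgt; apply/negP => lt.
    have := C1 _ lt.
    case: (posnP r) => [r0|rpos].
      have := ap1 (p1 + r)%N (leq_addr _ _) lt; lia.
    have rr : (r.-1 < r)%N by lia.
    have [_ h] := MI _ rr.
    have h3 : (p1 + r.-1 < p1 + r)%N by lia.
    have := inc _ _ h3 lt; rewrite h; lia.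
  case: (posnP r) => [r0|rpos]; first by rewrite r0 addn0.
  have rr : (r.-1 < r)%N by lia.
  have [h _] := MI _ rr; lia.
exists p1; split; first by rewrite -kE.
move=> i j; split; [|split].
- move=> ip /andP [ej jr].
  have tr : (j - e < r)%N by lia.
  have [h1 h2] := MI _ tr.
  have im : (p1 + (j - e) < m)%N by apply: leq_trans h1 km.
  apply: (cl (Ordinal im) i j) => //=; first by rewrite h2; lia.
  apply/eqP => /(congr1 val) /=; lia.
- move=> /andP [pi ipr] jer.
  have tr : (i - p1 < r)%N by lia.
  have [h1 h2] := MI _ tr.
  rewrite subnKC // in h1 h2.
  case: (ltngtP j (piv i)) => hj.
  + rewrite bef //.
    case: (leqP e j) => //= ej.
    have -> : ((j - e)%N == (i - p1)%N) = false by apply/negbTE; lia.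
    by [].
  + have tr' : (j - e < r)%N by lia.
    have [h1' h2'] := MI _ tr'.
    have im : (p1 + (j - e) < m)%N by apply: leq_trans h1' km.
    rewrite (cl (Ordinal im) i j) //=; last 2 first.
    * by rewrite h2'; lia.
    * apply/eqP => /(congr1 val) /=; lia.
    have -> : (e <= j)%N by lia.
    have -> : ((j - e)%N == (i - p1)%N) = false by apply/negbTE; lia.
    by [].
  + rewrite (one i j) //.
    have -> : (e <= j)%N by lia.
    have -> : ((j - e)%N == (i - p1)%N) = true by apply/eqP; lia.
    by [].
- move=> ik; apply: Z; [by rewrite kE | exact: ltn_ord].
Qed.
End RrefEx.


Section PolyPart.
Variables (K : fieldType) (n s d : nat).
Notation poly := {mpoly K[n]}.
Notation mon := 'X_{1..n}.
Variable F : 'I_s -> poly.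

Lemma ideal0 : in_ideal F 0.
Proof. by exists (fun _ => 0); rewrite big1 // => k _; rewrite mul0r. Qed.

Lemma idealD p q : in_ideal F p -> in_ideal F q -> in_ideal F (p + q).
Proof.
move=> [h1 ->] [h2 ->]; exists (fun k => h1 k + h2 k).
by rewrite -big_split; apply: eq_bigr => k _; rewrite mulrDl.
Qed.

Lemma idealZ c p : in_ideal F p -> in_ideal F (c *: p).
Proof.
move=> [h ->]; exists (fun k => c *: h k).
by rewrite scaler_sumr; apply: eq_bigr => k _; rewrite scalerAl.
Qed.

Lemma idealXF (mo : mon) k : in_ideal F ('X_[mo] * F k).
Proof.
exists (fun k' => (k' == k)%:R * 'X_[mo]).
rewrite (bigD1 k) //= eqxx mul1r big1 ?addr0 // => k' ne.
by rewrite (negbTE ne) !mul0r.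
Qed.

Definition comb (Ps : seq poly) (x : 'rV[K]_(size Ps)) : poly :=
  \sum_(l < size Ps) x 0 l *: nth 0 Ps l.

Lemma comb_coef Ps x (mo : mon) :
  (comb x)@_mo = \sum_(l < size Ps) x 0 l * (nth 0 Ps l)@_mo.
Proof.
rewrite /comb (raddf_sum (mcoeff mo)); apply: eq_bigr => l _; exact: mcoeffZ.
Qed.

Lemma macaulay_mul Ps cols x (j : 'I_(size cols)) :
  (x *m macaulay Ps cols) 0 j = (comb x)@_(nth 0%MM cols j).
Proof.
rewrite mxE comb_coef; apply: eq_bigr => l _; by rewrite mxE.
Qed.

Lemma comb_ideal Ps x : (forall g, g \in Ps -> in_ideal F g) -> in_ideal F (comb (Ps:=Ps) x).
Proof.
move=> h; rewrite /comb; apply: (big_ind (in_ideal F)).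
- exact: ideal0.
- exact: idealD.
- move=> l _; apply: idealZ; apply: h; exact: mem_nth.
Qed.

Lemma comb_supp Ps x (mo : mon) : (comb (Ps:=Ps) x)@_mo != 0 -> mo \in monomials_of Ps.
Proof.
apply: contraNT => nin; rewrite comb_coef big1 // => l _.
have : (nth 0 Ps l)@_mo == 0.
  rewrite -[_ == 0]negbK -mcoeff_msupp; apply: contra nin => h.
  rewrite /monomials_of mem_undup; apply/flatten_mapP; exists (nth 0 Ps l) => //.
  exact: mem_nth.
by move/eqP ->; rewrite mulr0.
Qed.

Definition spanned (Ps : seq poly) (g : poly) := exists x, g = comb (Ps:=Ps) x.

Lemma spanned0 Ps : spanned Ps 0.
Proof. by exists 0; rewrite /comb big1 // => l _; rewrite mxE scale0r. Qed.

Lemma spannedD Ps g1 g2 : spanned Ps g1 -> spanned Ps g2 -> spanned Ps (g1 + g2).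
Proof.
move=> [x1 ->] [x2 ->]; exists (x1 + x2).
by rewrite /comb -big_split; apply: eq_bigr => l _; rewrite mxE scalerDl.
Qed.

Lemma spannedZ Ps c g : spanned Ps g -> spanned Ps (c *: g).
Proof.
move=> [x ->]; exists (c *: x).
by rewrite /comb scaler_sumr; apply: eq_bigr => l _; rewrite mxE scalerA.
Qed.

Lemma spanned_mem Ps g : g \in Ps -> spanned Ps g.
Proof.
move=> gin; have il : (index g Ps < size Ps)%N by rewrite index_mem.
exists (\row_l ((l == Ordinal il)%:R)).
rewrite /comb (bigD1 (Ordinal il)) //= !mxE eqxx scale1r nth_index // big1 ?addr0 //.
by move=> l ne; rewrite mxE (negbTE ne) scale0r.
Qed.

Lemma spanned_sum Ps (I : eqType) (r : seq I) (G : I -> poly) :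
  (forall i, i \in r -> spanned Ps (G i)) -> spanned Ps (\sum_(i <- r) G i).
Proof.
move=> h; rewrite big_seq; apply: (big_ind (spanned Ps)).
- exact: spanned0.
- exact: spannedD.
- exact: h.
Qed.


Variable B : 'I_d -> mon.

Lemma sum_delta (G : 'I_d -> poly) i : \sum_(l < d) (l == i)%:R *: G l = G i.
Proof.
rewrite (bigD1 i) //= eqxx scale1r big1 ?addr0 // => l ne.
by rewrite (negbTE ne) scale0r.
Qed.

Lemma B_inj : quotient_basis F B -> injective B.
Proof.
move=> [_ indep] i j e; apply/eqP; apply: contraT => ne.
pose c := fun l : 'I_d => (l == i)%:R - (l == j)%:R : K.
have : in_ideal F (\sum_(l < d) c l *: 'X_[B l]).
  rewrite (eq_bigr (fun l => (l == i)%:R *: 'X_[B l] - (l == j)%:R *: 'X_[B l])); last first.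
    by move=> l _; rewrite scalerBl.
  rewrite sumrB !sum_delta e subrr; exact: ideal0.
move/indep => /(_ i) /eqP; rewrite /c eqxx eq_sym (negbTE ne) subr0.
by rewrite eq_sym oner_eq0.
Qed.

Lemma coef_sumB (c : 'I_d -> K) (mo : mon) :
  (\sum_(l < d) c l *: 'X_[B l])@_mo = \sum_(l < d) c l * (B l == mo)%:R.
Proof.
rewrite (raddf_sum (mcoeff mo)); apply: eq_bigr => l _.
by have := mcoeffZ (c l) 'X_[B l] mo; rewrite mcoeffX.
Qed.

Lemma coef_sumB_out (c : 'I_d -> K) (mo : mon) : mo \notin basis_seq B ->
  (\sum_(l < d) c l *: 'X_[B l])@_mo = 0.
Proof.
move=> nin; rewrite coef_sumB big1 // => l _.
have -> : (B l == mo) = false.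
  apply/negP => /eqP e; move: nin; rewrite -e /basis_seq; move/negP; apply.
  by apply: map_f; rewrite mem_enum.
by rewrite mulr0.
Qed.

Lemma coef_sumB_in (c : 'I_d -> K) i : injective B ->
  (\sum_(l < d) c l *: 'X_[B l])@_(B i) = c i.
Proof.
move=> inj; rewrite coef_sumB (bigD1 i) //= eqxx mulr1 big1 ?addr0 // => l ne.
by rewrite inj_eq // (negbTE ne) mulr0.
Qed.

Lemma mem_reducible (a mo : mon) : mo \in reducible B a ->
  exists i, mo = mnm_add a (B i) /\ mo \notin basis_seq B.
Proof.
rewrite /reducible mem_undup mem_filter => /andP [nin /mapP [b bin eb]].
move: bin; rewrite /basis_seq => /mapP [i _ ebi]; exists i; split => //.
by rewrite eb ebi.
Qed.

End PolyPart.


Theorem mainTheorem2 (K : fieldType) (n s d : nat)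
    (F : 'I_s -> {mpoly K[n]}) (B : 'I_d -> 'X_{1..n}) (a : 'X_{1..n})
    (T : 'M[K]_d) (H : 'I_d -> 'I_s -> {mpoly K[n]}) :
  quotient_basis F B ->
  a != mnm0 ->
  (forall i : 'I_d,
     in_ideal F ('X_[a] * 'X_[B i] - \sum_(j < d) T i j *: 'X_[B j])) ->
  (forall i : 'I_d,
     'X_[a] * 'X_[B i] - \sum_(j < d) T i j *: 'X_[B j]
       = \sum_(k < s) H i k * F k) ->
  elimination_template F (col_monomials H) B a.
Proof.
move=> qb _ hT hV.
have inj := B_inj qb.
case: qb => _ indep.
set A := col_monomials H.
set P := shifts F A.
set cols := columns P B a.
set E := excessive P B a.
set Rd := reducible B a.
have Pideal : forall g, g \in P -> in_ideal F g.
  move=> g; rewrite /P /shifts mem_undup => /flatten_mapP [k _ /mapP [mo _ ->]].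
  exact: idealXF.
have XFin : forall i k mo, mo \in msupp (H i k) -> 'X_[mo] * F k \in P.
  move=> i k mo hm; rewrite /P /shifts mem_undup; apply/flatten_mapP; exists k.
    by rewrite mem_enum.
  apply: map_f; rewrite /A /col_monomials mem_undup; apply/flatten_mapP; exists i => //.
  by rewrite mem_enum.
set V := fun i => 'X_[a] * 'X_[B i] - \sum_(j < d) T i j *: 'X_[B j].
have Vspan : forall i, spanned P (V i).
  move=> i; rewrite /V hV; apply: spanned_sum => k _.
  rewrite {1}(mpolyE (H i k)) big_distrl /=; apply: spanned_sum => mo hm.
  rewrite -scalerAl; apply: spannedZ; apply: spanned_mem; exact: XFin hm.
have Vcoef_out : forall i mo, mo \notin basis_seq B -> (V i)@_mo = (mnm_add a (B i) == mo)%:R.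
  move=> i mo nin; rewrite /V mcoeffB -mpolyXD mcoeffX coef_sumB_out // subr0 //.
have RdP : {subset Rd <= monomials_of P}.
  move=> mo /mem_reducible [i [emo nin]].
  have [x ex] := Vspan i.
  apply: (comb_supp (x:=x)); rewrite -ex Vcoef_out // emo eqxx; exact: oner_neq0.
have colsE : cols = E ++ Rd ++ basic_present P B.
  rewrite /cols /columns; congr (_ ++ (_ ++ _)); apply/all_filterP/allP => mo; exact: RdP.
have uRd : uniq Rd by exact: undup_uniq.
have nthE : forall j, (j < size E)%N -> nth 0%MM cols j = nth 0%MM E j.
  by move=> j jl; rewrite colsE nth_cat jl.
have nthR : forall j, (size E <= j)%N -> (j < size E + size Rd)%N ->
    nth 0%MM cols j = nth 0%MM Rd (j - size E).
  move=> j j1 j2; rewrite colsE nth_cat ltnNge j1 /= nth_cat.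
  have -> : (j - size E < size Rd)%N by lia.
  by [].
have memE : forall mo, mo \in E -> (mo \notin Rd) && (mo \notin basis_seq B).
  by move=> mo; rewrite mem_filter => /andP [h _].
have memRd : forall mo, mo \in Rd -> mo \notin basis_seq B.
  by move=> mo /mem_reducible [? [_ ?]].
have sz : (size E + size Rd <= size cols)%N by rewrite colsE catA size_cat size_cat leq_addr.
split; first exact: RdP.

apply: rref_shape => //.
- move=> x hx.
  set q := comb x.
  have Cq : forall mo, q@_mo != 0 -> mo \in basis_seq B.
    move=> mo nz; apply: contraT => nin.
    have mP := comb_supp nz.
    case: (boolP (mo \in Rd)) => inR.
      have jl : (size E + index mo Rd < size cols)%N.
        have h : (index mo Rd < size Rd)%N by rewrite index_mem.
        lia.
      have jr : (Ordinal jl < size E + size Rd)%N.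
        by rewrite /= ltn_add2l index_mem.
      have := hx (Ordinal jl) jr; rewrite macaulay_mul /= nthR ?leq_addr // addKn nth_index //.
      by move=> h; rewrite -/q h eqxx in nz.
    have inE : mo \in E by rewrite /E /excessive mem_filter inR nin mP.
    have jl : (index mo E < size cols)%N.
      have h : (index mo E < size E)%N by rewrite index_mem.
      lia.
    have jr : (Ordinal jl < size E + size Rd)%N.
      have h : (index mo E < size E)%N by rewrite index_mem.
      rewrite /=; lia.
    have := hx (Ordinal jl) jr; rewrite macaulay_mul /= nthE ?index_mem // nth_index //.
    by move=> h; rewrite -/q h eqxx in nz.
  pose c := fun i => q@_(B i).
  have qE : q = \sum_(l < d) c l *: 'X_[B l].
    apply/mpolyP => mo.
    case: (boolP (mo \in basis_seq B)) => [/mapP [i _ ->]|nin].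
      by rewrite coef_sumB_in.
    rewrite coef_sumB_out //; apply/eqP; apply: contraT => /Cq; by rewrite (negbTE nin).
  have hq : in_ideal F (\sum_(l < d) c l *: 'X_[B l]).
    by rewrite -qE; apply: comb_ideal.
  have c0 := indep c hq.
  apply/rowP => j; rewrite macaulay_mul mxE.
  case: (boolP (nth 0%MM cols j \in basis_seq B)) => [/mapP [i _ ->]|nin].
    exact: c0 i.
  apply/eqP; apply: contraT => /Cq; by rewrite (negbTE nin).
- move=> t tr.
  have tin : nth 0%MM Rd t \in Rd by exact: mem_nth.
  have [i [emo nin]] := mem_reducible tin.
  have [x ex] := Vspan i.
  exists x; split.
    move=> j jE; rewrite macaulay_mul nthE // -ex.
    have /memE /andP [n1 n2] : nth 0%MM E j \in E by exact: mem_nth.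
    rewrite Vcoef_out //.
    have -> : (mnm_add a (B i) == nth 0%MM E j) = false.
      apply/negP => /eqP h; move: n1; by rewrite -h -emo tin.
    by [].
  move=> j /andP [j1 j2].
  have j1' : (size E <= j)%N := j1.
  have j2' : (j < size E + size Rd)%N := j2.
  have tr' : (t < size Rd)%N := tr.
  change ((x *m macaulay P cols) 0 j = ((j - size E)%N == t)%:R).
  rewrite macaulay_mul nthR // -ex.
  have jin : nth 0%MM Rd (j - size E) \in Rd.
    apply: mem_nth; rewrite ltn_subLR; [exact: j2' | exact: j1'].
  rewrite Vcoef_out ?memRd // -emo nth_uniq //; [by rewrite eq_sym | rewrite ltn_subLR; [exact: j2' | exact: j1']].
Qed.
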